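(* Let $n\geqslant 0$ and let $W_n$ act on $\mathcal{C}^n$ via its left action on $W_n/W_{n-1}$. Then: (1) for each $k$, $W_n$ acts transitively on the set of $k$-simplices of $\mathcal{C}^n$; (2) for any $k$-simplex $C$ and any permutation $\phi$ of the vertices of $C$, there is an element of $W_n$ that maps $C$ to itself and acts on its vertices as $\phi$; (3) every simplex of $\mathcal{C}^n$ is a face of an $n$-simplex.
   Context: Standing setup: $\Gamma_1$ is an arbitrary finite Coxeter diagram with a preferred vertex $s_1$ (edge $\{s,t\}$ iff $m_{st}\geqslant3$; unlabelled edge means $m_{st}=3$, no edge means $m_{st}=2$). For $n\geqslant 2$, $\Gamma_n$ is obtained from $\Gamma_{n-1}$ by adding one new vertex $s_n$ joined by an unlabelled edge to $s_{n-1}$ and to no other vertex. $\Gamma_0$ is $\Gamma_1$ with $s_1$ deleted; $\Gamma_{-1}$ is $\Gamma_1$ with $s_1$ and all its neighbours deleted. For $n\geqslant -1$, $S_n$ is the vertex set of $\Gamma_n$ and $W_n$ the Coxeter group; $W_m$ ($m\leqslant n$) is the standard parabolic subgroup of $W_n$ generated by $S_m$. Definition of $\mathcal{C}^n$ ($n\geqslant 0$): the abstract simplicial complex with vertex set $W_n/W_{n-1}$ whose $k$-simplices ($0\leqslant k\leqslant n$) are the sets $\{c(s_{n-k+1}\cdots s_n)W_{n-1},\ \ldots,\ cs_nW_{n-1},\ cW_{n-1}\}$ for $c\in W_n$; such $c$ is called a lift of the simplex. *)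

(* Defs.v *)
(* Coxeter groups are given by generators and relations;
   elements are represented by words (seq of generators) modulo the
   congruence [coxeq] generated by the Coxeter relations (setoid style). *)
From mathcomp Require Import all_boot.
Set Implicit Arguments. Unset Strict Implicit. Unset Printing Implicit Defensive.

Section Coxeter.
(* Gamma_1: finite vertex set V, preferred vertex s1, Coxeter matrix m.
   Convention: m a b = 0 encodes m_{ab} = infinity (no relation). *)
Variables (V : finType) (s1 : V) (m : V -> V -> nat).

(* Generators of all Gamma_n at once: inl a = vertex a of Gamma_1,
   inr j = the tail vertex s_{j+2}. *)
Definition gen := (V + nat)%type.

(* s_i for i >= 1 (s_1 is the preferred vertex); sgen 0 is junk, never used. *)
Definition sgen (i : nat) : gen :=
  match i with 0 | 1 => inl s1 | i'.+2 => inr i' end.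

(* Coxeter matrix of the union of all Gamma_n. *)
Definition mG (x y : gen) : nat :=
  match x, y with
  | inl a, inl b => m a b
  | inr i, inr j => if i == j then 1 else if (i == j.+1) || (j == i.+1) then 3 else 2
  | inl a, inr j => if (j == 0) && (a == s1) then 3 else 2
  | inr j, inl a => if (j == 0) && (a == s1) then 3 else 2
  end.

(* Sset l = S_{l-1}, the vertex set of Gamma_{l-1} (l = 0 gives S_{-1}). *)
Definition Sset (l : nat) : pred gen :=
  fun x => match l, x with
  | 0, inl a => (a != s1) && (m s1 a == 2)   (* s1 and its neighbours deleted *)
  | 0, inr _ => false
  | 1, inl a => a != s1
  | 1, inr _ => false
  | l'.+2, inl _ => true
  | l'.+2, inr j => j.+2 <= l'.+1
  end.

Fixpoint braid (s t : gen) (k : nat) : seq gen :=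
  if k is k'.+1 then s :: braid t s k' else [::].

Inductive coxeq (P : pred gen) : seq gen -> seq gen -> Prop :=
| ce_refl w : coxeq P w w
| ce_sym w w' : coxeq P w w' -> coxeq P w' w
| ce_trans w1 w2 w3 : coxeq P w1 w2 -> coxeq P w2 w3 -> coxeq P w1 w3
| ce_ctx u v w w' : coxeq P w w' -> coxeq P (u ++ w ++ v) (u ++ w' ++ v)
| ce_inv s : P s -> coxeq P [:: s; s] [::]
| ce_braid s t : P s -> P t -> s != t -> mG s t != 0 ->
    coxeq P (braid s t (mG s t)) (braid t s (mG s t)).

(* Elements of W_n: words w with all (Sset n.+1) w, modulo coxeq (Sset n.+1).
   W_{n-1}: elements of W_n represented by words in S_{n-1}. *)
Definition inW (n : nat) (w : seq gen) := all (Sset n.+1) w.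

(* x W_{n-1} = y W_{n-1} in W_n / W_{n-1}  (i.e. x^{-1} y in W_{n-1}) *)
Definition coset_eq (n : nat) (x y : seq gen) : Prop :=
  exists w, all (Sset n) w /\ coxeq (Sset n.+1) (x ++ w) y.

Definition tword (n j : nat) : seq gen := map sgen (iota (n - j).+1 j).

Definition simplex_verts (n k : nat) (c : seq gen) : seq gen -> Prop :=
  fun x => exists j, j <= k /\ coset_eq n x (c ++ tword n j).

Definition is_simplex (n k : nat) (X : seq gen -> Prop) : Prop :=
  k <= n /\ exists c, inW n c /\
    forall x, inW n x -> (X x <-> simplex_verts n k c x).

Definition act (n : nat) (g : seq gen) (X : seq gen -> Prop) : seq gen -> Prop :=
  fun y => exists x, inW n x /\ X x /\ coset_eq n y (g ++ x).

Definition setEq (n : nat) (X Y : seq gen -> Prop) : Prop :=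
  forall x, inW n x -> (X x <-> Y x).

Definition is_vperm (n : nat) (X : seq gen -> Prop) (phi : seq gen -> seq gen) : Prop :=
  [/\ (forall x, inW n x -> X x -> inW n (phi x) /\ X (phi x)),
      (forall x y, inW n x -> inW n y -> X x -> X y ->
          (coset_eq n (phi x) (phi y) <-> coset_eq n x y))
    & (forall y, inW n y -> X y -> exists x, [/\ inW n x, X x & coset_eq n (phi x) y])].

End Coxeter.

(* Main.v *)
Require Import Defs.
From mathcomp Require Import all_boot zify.
From Stdlib Require Import Classical ClassicalEpsilon.
Set Implicit Arguments. Unset Strict Implicit. Unset Printing Implicit Defensive.

Ltac ifs := repeat match goal with
 | |- context [if ?b then _ else _] =>
   lazymatch b with context [if _ then _ else _] => fail | _ =>
   let H := fresh "H" in case H: b; [move: H => /idP H | move: H => /negbT H] end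
 end.

Definition swap (x y z : nat) := if z == x then y else if z == y then x else z.
Lemma swapK x y z : swap x y (swap x y z) = z.
Proof. rewrite /swap; ifs; lia. Qed.
Lemma swap_le x y z k : x <= k -> y <= k -> z <= k -> swap x y z <= k.
Proof. rewrite /swap => *; ifs; lia. Qed.

Section Aux.
Variables (V : finType) (s1 : V) (m : V -> V -> nat).
Hypothesis mdiag : forall a, m a a = 1.
Variable n : nat.

Local Notation P := (Sset s1 m n.+1).
Local Notation cq := (coxeq s1 m P).
Local Notation ceq := (coset_eq s1 m n).
Local Notation sg := (sgen s1).
Local Notation tw := (tword s1 n).

Lemma cq_l u w w' : cq w w' -> cq (u ++ w) (u ++ w').
Proof. by move=> H; have := ce_ctx u [::] H; rewrite !cats0. Qed.

Lemma cq_r v w w' : cq w w' -> cq (w ++ v) (w' ++ v).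
Proof. by move=> H; have := ce_ctx [::] v H. Qed.

Lemma Sset_sub l x : Sset s1 m l x -> Sset s1 m l.+1 x.
Proof.
case: l => [|[|l]]; case: x => [a|j] //=.
- by case/andP.
- by move=> h; apply: ltnW.
Qed.

Lemma Sset_sgen l i : 0 < i -> Sset s1 m l (sg i) = (i < l).
Proof.
case: i => [|[|i]] // _; case: l => [|[|l]] //=; by rewrite eqxx.
Qed.

Lemma mG_xx x : mG s1 m x x = 1.
Proof. by case: x => [a|j] /=; rewrite ?mdiag ?eqxx. Qed.

Lemma mG_sgen i j : 0 < i -> 0 < j ->
  mG s1 m (sg i) (sg j) =
  if i == j then 1 else if (i == j.+1) || (j == i.+1) then 3 else 2.
Proof.
case: i => [|[|i]] // _; case: j => [|[|j]] // _ /=.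
- by rewrite mdiag.
- by rewrite eqxx andbT; case: j.
- by rewrite eqxx andbT; case: i.
Qed.

Lemma mG_sgen2 i j : 0 < i -> 0 < j -> (i.+2 <= j) || (j.+2 <= i) ->
  mG s1 m (sg i) (sg j) = 2.
Proof.
move=> hi hj h; rewrite mG_sgen //.
have -> : (i == j) = false by apply/eqP; lia.
have -> : (i == j.+1) = false by apply/eqP; lia.
have -> : (j == i.+1) = false by apply/eqP; lia.
done.
Qed.

Lemma mG_sgen3 i : 0 < i -> mG s1 m (sg i.+1) (sg i) = 3.
Proof.
move=> hi; rewrite mG_sgen //.
have -> : (i.+1 == i) = false by apply/eqP; lia.
by rewrite eqxx.
Qed.

Lemma sgen_neq i j : 0 < i -> 0 < j -> i != j -> sg i != sg j.
Proof.
move=> hi hj hij; apply/eqP => e.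
have := mG_sgen hi hj; rewrite (negbTE hij) e mG_xx.
by case: ifP.
Qed.

Lemma all_sub l w : all (Sset s1 m l) w -> all (Sset s1 m l.+1) w.
Proof. by move=> /allP H; apply/allP => x /H; apply: Sset_sub. Qed.

Lemma cq_cancel c : all P c -> cq (rev c ++ c) [::].
Proof.
elim: c => [|x c IH]; first by move=> _; apply: ce_refl.
case/andP => Px Pc.
rewrite rev_cons cat_rcons.
apply: ce_trans (IH Pc).
have := ce_ctx (rev c) c (ce_inv s1 m Px).
by rewrite /= .
Qed.

Lemma cq_cancel' c : all P c -> cq (c ++ rev c) [::].
Proof.
move=> Pc; have := @cq_cancel (rev c); rewrite revK; apply.
by rewrite all_rev.
Qed.

Lemma ceq_refl x : ceq x x.
Proof. by exists [::]; rewrite cats0; split => //; apply: ce_refl. Qed.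

Lemma ceq_of_cq x y : cq x y -> ceq x y.
Proof. by move=> H; exists [::]; rewrite cats0. Qed.

Lemma ceq_sym x y : ceq x y -> ceq y x.
Proof.
case=> w [Hw H]; exists (rev w); split; first by rewrite all_rev.
apply: ce_trans (cq_r (rev w) (ce_sym H)) _.
rewrite -catA; have := cq_l x (cq_cancel' (all_sub Hw)).
by rewrite cats0.
Qed.

Lemma ceq_trans x y z : ceq x y -> ceq y z -> ceq x z.
Proof.
case=> w1 [H1 E1] [w2 [H2 E2]]; exists (w1 ++ w2); split.
  by rewrite all_cat H1 H2.
rewrite catA; exact: ce_trans (cq_r w2 E1) E2.
Qed.

Lemma ceq_mull g x y : ceq x y -> ceq (g ++ x) (g ++ y).
Proof. by case=> w [Hw E]; exists w; split => //; rewrite -catA; apply: cq_l. Qed.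

Lemma comm x u : P x -> all P u -> (forall y, y \in u -> mG s1 m x y = 2) ->
  cq (x :: u) (u ++ [:: x]).
Proof.
elim: u => [|y u IH] Px /=; first by move=> *; apply: ce_refl.
case/andP => Py Pu H.
have Hxy : mG s1 m x y = 2 by apply: H; rewrite inE eqxx.
have nxy : x != y by apply/eqP => e; move: Hxy; rewrite e mG_xx.
have B := ce_braid (s1:=s1) (m:=m) Px Py nxy; rewrite Hxy in B; have {}B := B isT.
have := ce_ctx [::] u B => /= B'.
apply: ce_trans B' _.
have := cq_l [:: y] (IH Px Pu _) => /=; apply => z zu; apply: H.
by rewrite inE zu orbT.
Qed.


Lemma tw_S j : j < n -> tw j.+1 = sg (n - j) :: tw j.
Proof.
move=> hj; rewrite /tword.
have -> : (n - j.+1).+1 = n - j by lia.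
done.
Qed.

Lemma tw_mem i y : y \in tw i -> exists z, [/\ (n - i).+1 <= z, z < (n - i).+1 + i & y = sg z].
Proof. by case/mapP => z; rewrite mem_iota => /andP [h1 h2] ->; exists z. Qed.

Lemma all_tw i : i <= n -> all P (tw i).
Proof.
move=> hi; apply/allP => y /tw_mem [z [h1 h2 ->]]; rewrite Sset_sgen; lia.
Qed.

Definition tau j i := if i == j then j.+1 else if i == j.+1 then j else i.

Lemma tau_core j i : j.+1 <= n -> i <= n ->
  ceq (sg (n - j) :: tw i) (tw (tau j i)).
Proof.
move=> hj hi; rewrite /tau.
have Ps : P (sg (n - j)) by rewrite Sset_sgen; lia.
case: eqP => [->|/eqP nij]; first by rewrite -tw_S //; apply: ceq_refl.
case: eqP => [->|/eqP nij1].
  rewrite tw_S //; apply: ceq_of_cq.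
  have := ce_ctx [::] (tw j) (ce_inv s1 m Ps); by [].
have [ltij|ltji] := ltnP i j.
  apply: ceq_sym; exists [:: sg (n - j)]; split.
    by rewrite /= Sset_sgen; lia.
  apply: ce_sym; apply: comm => //; first exact: all_tw.
  move=> y /tw_mem [z [h1 h2 ->]]; apply: mG_sgen2; lia.
have hij : j.+2 <= i by lia.
have E : tw i = map sg (iota (n - i).+1 (i - j.+2)) ++
   sg (n - j).-1 :: sg (n - j) :: tw j.
  rewrite /tword -map_cons -map_cons -map_cat; congr map.
  have -> : iota (n - i).+1 i = iota (n - i).+1 ((i - j.+2) + j.+2) by rewrite subnK.
  rewrite iotaD; congr cat.
  have -> : (n - i).+1 + (i - j.+2) = (n - j).-1 by lia.
  rewrite /=; have -> : ((n - j).-1).+1 = n - j by lia.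
  done.
set A := map sg _ in E; set T := tw j in E.
set s := sg (n - j); set s' := sg (n - j).-1.
have Ps' : P s' by rewrite /s' Sset_sgen; lia.
have Ss' : Sset s1 m n s' by rewrite /s' Sset_sgen; lia.
have PA : all P A.
  apply/allP => y /mapP [z]; rewrite mem_iota => /andP [h1 h2] ->.
  rewrite Sset_sgen; lia.
have PT : all P T by apply: all_tw; lia.
have C1 : cq (s :: A) (A ++ [:: s]).
  apply: comm => // y /mapP [z]; rewrite mem_iota => /andP [h1 h2] ->.
  apply: mG_sgen2; lia.
have C2 : cq [:: s; s'; s] [:: s'; s; s'].
  have ns : s != s' by apply: sgen_neq; lia.
  have B := ce_braid (s1:=s1) (m:=m) Ps Ps' ns.
  have e3 : mG s1 m s s' = 3.
    rewrite /s /s'; have -> : n - j = (n - j).-1.+1 by lia.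
    by apply: mG_sgen3; lia.
  by rewrite e3 in B; apply: B.
have C3 : cq (s' :: T) (T ++ [:: s']).
  apply: comm => // y /tw_mem [z [h1 h2 ->]]; apply: mG_sgen2; lia.
apply: ceq_sym; exists [:: s']; split; first by rewrite /= Ss'.
apply: ce_sym; rewrite E.
apply: ce_trans (cq_r (s' :: s :: T) C1) _; rewrite -catA /=.
apply: ce_trans (cq_l A (ce_ctx [::] T C2)) _; rewrite /=.
have := cq_l (A ++ [:: s'; s]) C3; rewrite -!catA /=; apply.
Qed.

Section WithC.
Variable c : seq (gen V).
Hypothesis Pc : all P c.

Definition rr j := c ++ sg (n - j) :: rev c.
Definition vv i := c ++ tw i.

Lemma all_rr j : j < n -> all P (rr j).
Proof. move=> hj; rewrite /rr all_cat Pc; apply/andP; split => //; apply/andP; split; last by move: Pc; rewrite -all_rev => H; exact: H. by rewrite Sset_sgen; lia. Qed.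

Lemma r_act j i : j.+1 <= n -> i <= n -> ceq (rr j ++ vv i) (vv (tau j i)).
Proof.
move=> hj hi; rewrite /rr /vv.
apply: ceq_trans (ceq_mull c (tau_core hj hi)).
apply: ceq_of_cq; rewrite -catA /=; apply: cq_l.
have := cq_l [:: sg (n - j)] (cq_r (tw i) (cq_cancel Pc)).
by rewrite /= -catA.
Qed.

Fixpoint hword j d := if d is d'.+1 then rr j ++ hword j.+1 d' else [::].

Definition cyc j d i :=
  if i < j then i else if i < j + d then i.+1 else if i == j + d then j else i.

Lemma all_hword j d : j + d <= n -> all P (hword j d).
Proof.
elim: d j => [|d IH] j hjd //=; rewrite all_cat all_rr ?IH //; lia.
Qed.

Lemma cyc_le j d i : i <= n -> j + d <= n -> cyc j d i <= n.
Proof. rewrite /cyc; move=> *; ifs; lia. Qed.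

Lemma tau_cyc j d i : tau j (cyc j.+1 d i) = cyc j d.+1 i.
Proof.
rewrite /tau /cyc.
ifs; lia.
Qed.

Lemma h_act j d i : j + d <= n -> i <= n -> ceq (hword j d ++ vv i) (vv (cyc j d i)).
Proof.
elim: d j => [|d IH] j hjd hi.
  have -> : cyc j 0 i = i by rewrite /cyc; ifs; lia.
  exact: ceq_refl.
rewrite /= -catA.
have hj1 : j.+1 + d <= n by lia.
apply: ceq_trans (ceq_mull _ (IH _ hj1 hi)) _.
rewrite -tau_cyc; apply: r_act; first lia.
exact: cyc_le.
Qed.

Lemma perm_lemma k : k <= n -> forall p : nat -> nat,
  (forall i, i <= k -> p i <= k) ->
  (forall x y, x <= k -> y <= k -> p x = p y -> x = y) ->
  exists g, all P g /\ forall i, i <= n -> ceq (g ++ vv i) (vv (if i <= k then p i else i)).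
Proof.
elim: k => [|k IH] hk p pk pinj.
  exists [::]; split => // i hi /=.
  case: ifP => h; last exact: ceq_refl.
  have -> : i = 0 by lia.
  have -> : p 0 = 0 by have := pk 0 isT; lia.
  exact: ceq_refl.
set j := p k.+1.
have hj : j <= k.+1 by apply: pk.
set d := k.+1 - j.
have hjd : j + d = k.+1 by rewrite /d; lia.
pose cinv y := if y < j then y else y.-1.
have pne : forall i, i <= k -> p i != j.
  move=> i hi; apply/eqP => e; have := pinj i k.+1; rewrite e => /(_ _ _ erefl); lia.
have cycinv : forall y, y <= k.+1 -> y != j -> cyc j d (cinv y) = y.
  move=> y hy /eqP hyj; rewrite /cyc /cinv; ifs; lia.
have [g' [Pg' Hg']] : exists g, all P g /\ forall i, i <= n ->
    ceq (g ++ vv i) (vv (if i <= k then cinv (p i) else i)).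
  apply: IH; first lia.
    move=> i hi; have := pk i (leqW hi); have := pne i hi; rewrite /cinv.
    case: ifP => /= *; lia.
  move=> x y hx hy e; apply: pinj; try lia.
  by rewrite -(cycinv (p x)) ?e ?cycinv ?pne ?pk //; apply: leqW.
exists (hword j d ++ g'); split.
  by rewrite all_cat Pg' all_hword // hjd.
move=> i hi; rewrite -catA.
apply: ceq_trans (ceq_mull _ (Hg' i hi)) _.
have hle : (if i <= k then cinv (p i) else i) <= n.
  case: ifP => h; last done.
  have := pk i (leqW h); rewrite /cinv; case: ifP => *; lia.
apply: ceq_trans (h_act _ hle) _; first by rewrite hjd.
have -> : cyc j d (if i <= k then cinv (p i) else i) = (if i <= k.+1 then p i else i).
  case: (ltngtP i k.+1) => h.
  - have h' : i <= k by lia.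
    rewrite h' /=.
    rewrite cycinv //; [exact: pk (leqW h') | exact: pne].
  - have h1 : (i <= k) = false by apply/negbTE; rewrite -ltnNge; lia.
    have h2 : (i <= k.+1) = false by apply/negbTE; rewrite -ltnNge; lia.
    rewrite h1 /cyc; ifs; lia.
  - rewrite h ltnn -/j /cyc; ifs; lia.
exact: ceq_refl.
Qed.

Lemma dicho k : k <= n -> forall a b, a <= k -> b <= k -> a != b ->
  ceq (vv a) (vv b) -> forall i, i <= k -> ceq (vv i) (vv 0).
Proof.
move=> hk a b ha hb nab hab i hi.
case: (posnP i) => [->|ipos]; first exact: ceq_refl.
pose b' := swap a 0 b.
pose p z := swap b' i (swap a 0 z).
have pk : forall z, z <= k -> p z <= k.
  move=> z hz; rewrite /p; apply: swap_le => //; try apply: swap_le => //; lia.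
have pinj : forall x y, x <= k -> y <= k -> p x = p y -> x = y.
  move=> x y _ _ e; move: (f_equal (swap a 0) (f_equal (swap b' i) e)).
  by rewrite /p !swapK.
have [g [Pg Hg]] := perm_lemma hk pk pinj.
have Ha := Hg a (leq_trans ha hk); rewrite ha in Ha.
have Hb := Hg b (leq_trans hb hk); rewrite hb in Hb.
have pa : p a = 0.
  rewrite /p /b' /swap; move/eqP: nab => nab; ifs; lia.
have pb : p b = i.
  rewrite /p /b' /swap; move/eqP: nab => nab; ifs; lia.
rewrite pa in Ha; rewrite pb in Hb.
apply: ceq_trans (ceq_sym Hb) _.
apply: ceq_trans (ceq_mull g (ceq_sym hab)) Ha.
Qed.

End WithC.

Lemma cancel_ceq c d t : all P c -> ceq ((d ++ rev c) ++ (c ++ t)) (d ++ t).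
Proof.
move=> Pc; apply: ceq_of_cq; rewrite -catA; apply: cq_l.
rewrite catA; have := cq_r t (cq_cancel Pc); by [].
Qed.

Lemma part1 k X Y : is_simplex s1 m n k X -> is_simplex s1 m n k Y ->
  exists g, inW s1 m n g /\ setEq s1 m n (act s1 m n g X) Y.
Proof.
case=> hk [c [Pc HX]] [_ [d [Pd HY]]]; rewrite /inW in Pc Pd.
exists (d ++ rev c); split; first by rewrite /inW all_cat all_rev Pc Pd.
move=> y Py; rewrite HY //; split.
- case=> x [Px [Xx Hy]]; case/(HX x Px): Xx => j [hj Hx]; exists j; split => //.
  apply: ceq_trans Hy _; apply: ceq_trans (ceq_mull _ Hx) _.
  exact: cancel_ceq.
- case=> j [hj Hy]; exists (c ++ tw j); split.
    by rewrite /inW all_cat Pc all_tw //; lia.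
  split; first by apply/HX; [rewrite /inW all_cat Pc all_tw //; lia | exists j; split => //; apply: ceq_refl].
  apply: ceq_trans Hy _; apply: ceq_sym; exact: cancel_ceq.
Qed.

Lemma part3 k X : is_simplex s1 m n k X ->
  exists Y, is_simplex s1 m n n Y /\ forall x, inW s1 m n x -> X x -> Y x.
Proof.
case=> hk [c [Pc HX]]; exists (simplex_verts s1 m n n c); split.
  by split => //; exists c; split => // x _.
move=> x Px /(HX x Px) [j [hj H]]; exists j; split => //; lia.
Qed.

Lemma part2 k X : is_simplex s1 m n k X ->
  forall phi, is_vperm s1 m n X phi ->
  exists g, [/\ inW s1 m n g, setEq s1 m n (act s1 m n g X) X &
    forall x, inW s1 m n x -> X x -> ceq (g ++ x) (phi x)].
Proof.
case=> hk [c [Pc HX]] phi [Hph1 Hph2 Hph3]; rewrite /inW in Pc.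
have Pv : forall i, i <= k -> all P (vv c i).
  by move=> i hi; rewrite /vv all_cat Pc all_tw //; lia.
have Xv : forall i, i <= k -> X (vv c i).
  by move=> i hi; apply/HX; [exact: Pv | exists i; split => //; apply: ceq_refl].
have [g [Pg Hg]] : exists g, all P g /\ forall i, i <= k -> ceq (g ++ vv c i) (phi (vv c i)).
  case: (classic (forall i, i <= k -> ceq (vv c i) (vv c 0))) => [Hall|Hnot].
    exists [::]; split => // i hi /=.
    have [Pp Xp] := Hph1 _ (Pv i hi) (Xv i hi).
    have [j [hj Hj]] := (HX _ Pp).1 Xp.
    apply: ceq_trans (Hall i hi) _; apply: ceq_trans (ceq_sym (Hall j hj)) _.
    exact: ceq_sym.
  have dist : forall a b, a <= k -> b <= k -> ceq (vv c a) (vv c b) -> a = b.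
    move=> a b ha hb hab; apply: NNPP => nab; apply: Hnot.
    apply: (dicho Pc hk ha hb _ hab); exact/eqP.
  have ex : forall i, exists j, i <= k -> j <= k /\ ceq (phi (vv c i)) (vv c j).
    move=> i; case: (leqP i k) => hi.
      have [Pp Xp] := Hph1 _ (Pv i hi) (Xv i hi).
      have [j [hj Hj]] := (HX _ Pp).1 Xp.
      by exists j.
    by exists 0 => h; lia.
  pose p i := proj1_sig (constructive_indefinite_description _ (ex i)).
  have hp : forall i, i <= k -> p i <= k /\ ceq (phi (vv c i)) (vv c (p i)).
    by move=> i hi; rewrite /p; case: constructive_indefinite_description => j /= H; apply: H.
  have pk : forall i, i <= k -> p i <= k by move=> i hi; case: (hp i hi).
  have pinj : forall x y, x <= k -> y <= k -> p x = p y -> x = y.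
    move=> x y hx hy e; apply: dist => //.
    have Hx := (hp x hx).2; have Hy := (hp y hy).2; rewrite e in Hx.
    apply: (Hph2 _ _ (Pv x hx) (Pv y hy) (Xv x hx) (Xv y hy)).1.
    exact: ceq_trans Hx (ceq_sym Hy).
  have [g [Pg Hg]] := perm_lemma Pc hk pk pinj.
  exists g; split => // i hi.
  have := Hg i (leq_trans hi hk); rewrite hi => H.
  apply: ceq_trans H _; apply: ceq_sym; exact: (hp i hi).2.
have Hgx : forall x, all P x -> X x -> ceq (g ++ x) (phi x).
  move=> x Px Xx; have [i [hi Hx]] := (HX x Px).1 Xx.
  apply: ceq_trans (ceq_mull g Hx) _; apply: ceq_trans (Hg i hi) _.
  apply: (Hph2 _ _ (Pv i hi) Px (Xv i hi) Xx).2; exact: ceq_sym Hx.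
exists g; split => //.
move=> y Py; split.
- case=> x [Px [Xx Hy]]; have [Pphx Xphx] := Hph1 x Px Xx.
  have [j [hj Hj]] := (HX _ Pphx).1 Xphx.
  apply/(HX y Py); exists j; split => //.
  exact: ceq_trans Hy (ceq_trans (Hgx x Px Xx) Hj).
- move=> Xy; have [x [Px Xx Hx]] := Hph3 y Py Xy.
  exists x; split => //; split => //.
  exact: ceq_sym (ceq_trans (Hgx x Px Xx) Hx).
Qed.

End Aux.

Theorem lemma6p1 (V : finType) (s1 : V) (m : V -> V -> nat)
  (msym : forall a b, m a b = m b a)
  (mdiag : forall a, m a a = 1)
  (moff : forall a b, a != b -> m a b != 1)
  (n : nat) :
  (* (1) transitivity on k-simplices *)
  (forall k X Y, is_simplex s1 m n k X -> is_simplex s1 m n k Y ->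
     exists g, inW s1 m n g /\ setEq s1 m n (act s1 m n g X) Y) /\
  (* (2) every permutation of the vertices of a simplex is induced *)
  (forall k X, is_simplex s1 m n k X ->
     forall phi, is_vperm s1 m n X phi ->
     exists g, [/\ inW s1 m n g, setEq s1 m n (act s1 m n g X) X &
       forall x, inW s1 m n x -> X x -> coset_eq s1 m n (g ++ x) (phi x)]) /\
  (* (3) every simplex is a face of an n-simplex *)
  (forall k X, is_simplex s1 m n k X ->
     exists Y, is_simplex s1 m n n Y /\
       forall x, inW s1 m n x -> X x -> Y x).
Proof.
split; first exact: part1.
split; first exact: (part2 mdiag).
exact: part3.
Qed.
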